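(* Let $K\ge 2$, $r\in[0,1]^K$ with $r(1)>r(2)>\cdots>r(K)$, and fix $j\in\{2,\ldots,K\}$. There exists $\bar\varepsilon>0$ such that the following holds. Let $\mathcal{S}_{\bar\varepsilon}:=\{\pi:\ 0<1-\pi(j)<\bar\varepsilon,\ \pi(1)\ge (1-\pi(j))/K\}$, and let $\pi_t=\pi_{\theta(t)}$ be the trajectory of the EG flow started at $\pi_0\in\mathcal{S}_{\bar\varepsilon}$. Write $\varepsilon_0:=1-\pi_0(j)$. Let $\mathcal{W}:=\{\pi:\pi(1)/\pi(j)\ge 1\}$, let $\tau_{\mathcal W}$ be the first time the trajectory enters $\mathcal W$, and let $\tau_{\mathrm{exit}}$ be the first time it leaves $\mathcal{S}_{\bar\varepsilon}$. Then \[ \tau_{\mathcal W}\wedge\tau_{\mathrm{exit}}\;\le\;\frac{4K}{\Delta_{1j}\,\varepsilon_0}\log\!\left(\frac{\pi_0(j)}{\pi_0(1)}\right). \]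
   Context: $K$-armed bandit with softmax policy $\pi_\theta(a)=e^{\theta(a)}/\sum_{a'}e^{\theta(a')}$, $\theta\in\mathbb{R}^K$. Advantage $U(a):=r(a)-\pi_\theta^\top r$; $\Delta_{ab}:=r(a)-r(b)$. The EG (enlightened gradient) flow is the continuous-time ODE $\dot\theta(a)=\sum_{a'=1}^K \mathbf{1}\{U(a')>0\}\,\pi(a')\,U(a')\,(\mathbf{1}\{a=a'\}-\pi(a))$. The constant $\bar\varepsilon$ is one for which, on $\mathcal{S}_{\bar\varepsilon}$, $\frac{d}{dt}\log(\pi(1)/\pi(j))\ge \frac{\Delta_{1j}}{4K}(1-\pi(j))$ and $\frac{d}{dt}(1-\pi(j))>0$ along the EG flow. *)

(* Defs.v *)
From HB Require Import structures.
From mathcomp Require Import all_boot all_order all_algebra.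
From mathcomp Require Import all_classical all_reals all_analysis.
Set Implicit Arguments. Unset Strict Implicit. Unset Printing Implicit Defensive.
Import Order.TTheory GRing.Theory Num.Theory.
Import numFieldNormedType.Exports.
Local Open Scope classical_set_scope.
Local Open Scope ring_scope.

Section EG.
Variables (R : realType) (K : nat).

Definition softmax (th : 'I_K -> R) (a : 'I_K) : R :=
  expR (th a) / \sum_(b < K) expR (th b).

Definition adv (r : 'I_K -> R) (th : 'I_K -> R) (a : 'I_K) : R :=
  r a - \sum_(b < K) softmax th b * r b.

Definition eg_field (r : 'I_K -> R) (th : 'I_K -> R) (a : 'I_K) : R :=
  \sum_(a' < K) (if 0 < adv r th a'
                 then softmax th a' * adv r th a' *
                      ((a == a')%:R - softmax th a)
                 else 0).

Definition eg_flow (r : 'I_K -> R) (theta : R -> 'I_K -> R) : Prop :=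
  forall (t : R) (a : 'I_K), 0 <= t ->
    is_derive t 1 (fun s => theta s a) (eg_field r (theta t) a).

Definition in_S (eps : R) (a1 j : 'I_K) (p : 'I_K -> R) : Prop :=
  0 < 1 - p j /\ 1 - p j < eps /\ (1 - p j) / K%:R <= p a1.

Definition in_W (a1 j : 'I_K) (p : 'I_K -> R) : Prop := p a1 / p j >= 1.

(* first time t >= 0 at which P holds (+oo if never) *)
Definition hit_time (P : R -> Prop) : \bar R :=
  ereal_inf [set t%:E | t in [set t : R | 0 <= t /\ P t]].

End EG.

(* Main.v *)
Require Import Defs.
From HB Require Import structures.
From mathcomp Require Import all_boot all_order all_algebra.
From mathcomp Require Import all_classical all_reals all_analysis.
From mathcomp Require Import ring lra.
Import Order.TTheory GRing.Theory Num.Theory.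
Import numFieldNormedType.Exports.
Local Open Scope classical_set_scope.
Local Open Scope ring_scope.

Section L.
Variables (R : realType) (K : nat).
Implicit Types (th : 'I_K -> R).

Lemma sumexp_gt0 th (a : 'I_K) : 0 < \sum_(b < K) expR (th b).
Proof.
rewrite (bigD1 a) //=; apply: ltr_pwDl; first exact: expR_gt0.
by apply: sumr_ge0 => i _; exact: ltW (expR_gt0 _).
Qed.

Lemma sm_gt0 th a : 0 < softmax th a.
Proof. by rewrite /softmax divr_gt0 ?expR_gt0 ?(sumexp_gt0 th a). Qed.

Lemma sm_sum th (a : 'I_K) : \sum_(b < K) softmax th b = 1.
Proof.
rewrite /softmax -mulr_suml divff //; exact: lt0r_neq0 (sumexp_gt0 th a).
Qed.

Lemma sm_ratio th a b : softmax th a / softmax th b = expR (th a - th b).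
Proof.
rewrite /softmax expRB; have := sumexp_gt0 th a => /lt0r_neq0 h.
by field; rewrite h /= gt_eqF ?expR_gt0.
Qed.

Definition gg r th a := if 0 < adv r th a then softmax th a * adv r th a else 0.

Lemma gg_ge0 r th a : 0 <= gg r th a.
Proof. rewrite /gg; case: ifP => // h; apply: mulr_ge0; [exact: ltW (sm_gt0 _ _)|exact: ltW]. Qed.

Lemma field_eq r th a : eg_field r th a =
  gg r th a - softmax th a * \sum_(b < K) gg r th b.
Proof.
rewrite /eg_field.
transitivity (\sum_(a' < K) (gg r th a' * ((a == a')%:R - softmax th a))).
  by apply: eq_bigr => b _; rewrite /gg; case: ifP => //; rewrite mul0r.
rewrite (eq_bigr (fun b => gg r th b * (a == b)%:R - softmax th a * gg r th b)); last first.
  by move=> b _; rewrite mulrBr (mulrC (gg r th b) (softmax th a)).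
rewrite sumrB -mulr_sumr; congr (_ - _).
rewrite (bigD1 a) //= eqxx mulr1 big1 ?addr0 // => b /negbTE hb.
by rewrite eq_sym hb mulr0.
Qed.
Lemma arith0 (p1 pj g1 gj G e k D : R) :
  0 < p1 -> 0 <= g1 -> 0 <= gj -> gj <= e -> p1 * (D - e) <= g1 -> p1 <= e ->
  0 < e -> e <= k * p1 -> e * k <= D / 16 -> 1 <= k -> pj = 1 - e -> e <= 1/3 ->
  g1 + gj <= G ->
  D / 2 * p1 <= g1 - gj - (p1 - pj) * G.
Proof.
move=> hp1 hg1 hgj hgje hg1l hp1e he hek hekD hk hpj he3 hG.
have h1 : (pj - p1) * (g1 + gj) <= (pj - p1) * G.
  by apply: ler_wpM2l => //; lra.
have h2 : gj * (e + p1) <= 2 * e * e by nra.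
have h3 : e * e <= p1 * (D / 16) by nra.
have h4 : e <= D / 16 by nra.
nra.
Qed.

Lemma rate r th (a1 j : 'I_K) (eps : R) :
  (forall a, 0 <= r a <= 1) -> a1 != j -> 0 < r a1 - r j ->
  (1 <= K%:R :> R) ->
  eps * K%:R <= (r a1 - r j) / 16 ->
  in_S eps a1 j (softmax th) ->
  (r a1 - r j) / 2 * softmax th a1 <= eg_field r th a1 - eg_field r th j.
Proof.
move=> hr01 ha1j hD hK heps [he0 [heeps hep1]].
set p := softmax th; set e := 1 - p j.
rewrite -/p -/e in he0 heeps hep1.
have hsum : \sum_(b < K | b != j) p b = e.
  have := sm_sum th j; rewrite (bigD1 j) //= -/p /e => <-; lra.
have hp1e : p a1 <= e.
  rewrite -hsum (bigD1 a1) //= ler_wpDr //.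
  by apply: sumr_ge0 => i _; exact: ltW (sm_gt0 _ _).
have hm : \sum_(b < K) p b * r b - r j = \sum_(b < K | b != j) p b * (r b - r j).
  have -> : \sum_(b < K) p b * r b - r j = \sum_(b < K) p b * (r b - r j).
    under [RHS]eq_bigr do rewrite mulrBr.
    by rewrite sumrB -mulr_suml sm_sum ?mul1r.
  by rewrite (bigD1 j) //= subrr mulr0 add0r.
have hmu : \sum_(b < K) p b * r b - r j <= e.
  rewrite hm -hsum; apply: ler_sum => b _.
  have := hr01 b; have := hr01 j; have := sm_gt0 th b; rewrite -/p. nra.
have hml : - e <= \sum_(b < K) p b * r b - r j.
  rewrite hm -hsum -sumrN; apply: ler_sum => b _.
  have := hr01 b; have := hr01 j; have := sm_gt0 th b; rewrite -/p. nra.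
have hadv1 : adv r th a1 = (r a1 - r j) - (\sum_(b < K) p b * r b - r j).
  by rewrite /adv; lra.
have hadvj : adv r th j = - (\sum_(b < K) p b * r b - r j).
  by rewrite /adv; lra.
have hk := hK.
have heK : e * K%:R <= eps * K%:R.
  by apply: ler_wpM2r; lra.
have heK2 : e <= e * K%:R by nra.
have he3 : e <= 1/3.
  have := hr01 a1; have := hr01 j; nra.
have heD : e <= (r a1 - r j) / 16 by nra.
have hg1 : p a1 * ((r a1 - r j) - e) <= gg r th a1.
  rewrite /gg hadv1 ifT; last by lra.
  apply: ler_wpM2l; [exact: ltW (sm_gt0 _ _)| lra].
have hgj : gg r th j <= e.
  rewrite /gg; case: ifP => h; last exact: ltW.
  rewrite -/p hadvj; rewrite hadvj in h; have := sm_gt0 th j; rewrite -/p /e in he0 hml *; nra.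
have hG : gg r th a1 + gg r th j <= \sum_(b < K) gg r th b.
  rewrite (bigD1 a1) //= lerD2l (bigD1 j) 1?eq_sym //= ler_wpDr //.
  by apply: sumr_ge0 => i _; exact: gg_ge0.
rewrite !field_eq.
have -> : forall g1 gj G p1 pj : R, g1 - p1 * G - (gj - pj * G) = g1 - gj - (p1 - pj) * G.
  by move=> *; ring.
apply: (@arith0 (p a1) (p j) (gg r th a1) (gg r th j) (\sum_(b < K) gg r th b) e K%:R (r a1 - r j)) => //.
- exact: sm_gt0.
- exact: gg_ge0.
- exact: gg_ge0.
- have : e / K%:R * K%:R <= p a1 * K%:R by apply: ler_wpM2r; [exact: le_trans ler01 hK | exact: hep1].
  rewrite divfK 1?mulrC //; apply: lt0r_neq0; exact: lt_le_trans ltr01 hK.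
- exact: le_trans heK heps.
- by rewrite /e opprB addrC subrK.
Qed.

Lemma sm_two th (a b : 'I_K) : a != b -> softmax th a + softmax th b <= 1.
Proof.
move=> hab; rewrite -(sm_sum th a) (bigD1 a) //= lerD2l (bigD1 b) 1?eq_sym //= ler_wpDr //.
by apply: sumr_ge0 => i _; exact: ltW (sm_gt0 _ _).
Qed.
End L.

Lemma mvt_helper (R : realType) (f df : R -> R) (a b : R) : 0 <= a -> a < b ->
  (forall t : R, 0 <= t -> is_derive t 1 f (df t)) ->
  exists2 c, a < c < b & f b - f a = df c * (b - a).
Proof.
move=> ha hab hd.
have hc : {within `[a, b], continuous f}.
  apply: derivable_within_continuous => x hx.
  have hx0 : 0 <= x by apply: le_trans ha _; rewrite (itvP hx).
  have H := hd x hx0. exact (@ex_derive _ _ _ _ _ _ _ H).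
have hd' : forall x, x \in `]a, b[ -> is_derive x 1 f (df x).
  move=> x hx; apply: hd; apply: le_trans ha _; rewrite (itvP hx) //.
have [c hc' ->] := MVT hab hd' hc.
by exists c => //; rewrite !(itvP hc').
Qed.

Theorem theorem3 (R : realType) (K : nat) (hK : (2 <= K)%N)
  (r : 'I_K -> R) (a1 j : 'I_K)
  (ha1 : nat_of_ord a1 = 0%N) (hj : nat_of_ord j <> 0%N)
  (hr01 : forall a, 0 <= r a <= 1)
  (hrdec : forall a b : 'I_K, (a < b)%N -> r b < r a) :
  exists epsbar : R, 0 < epsbar /\
    forall theta : R -> 'I_K -> R,
      eg_flow r theta ->
      in_S epsbar a1 j (softmax (theta 0)) ->
      let pi := fun t => softmax (theta t) in
      let eps0 := 1 - pi 0 j in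
      (Order.min (hit_time (fun t => in_W a1 j (pi t)))
                 (hit_time (fun t => ~ in_S epsbar a1 j (pi t)))
       <= ((4 * K%:R) / ((r a1 - r j) * eps0) * ln (pi 0 j / pi 0 a1))%:E)%E.
Proof.
have hj0 : (a1 < j)%N by rewrite ha1 lt0n; apply/eqP.
have hD : 0 < r a1 - r j by rewrite subr_gt0; apply: hrdec.
have ha1j : a1 != j by apply/eqP => h; apply: hj; rewrite -h.
have hK2 : (2%:R <= K%:R :> R) by rewrite ler_nat.
have hK1 : (1 <= K%:R :> R) by lra.
have hD1 : r a1 - r j <= 1 by have := hr01 a1; have := hr01 j; lra.
set D := r a1 - r j in hD hD1 *.
have hKn0 : K%:R != 0 :> R by apply: lt0r_neq0; lra.
exists (D / (16 * K%:R)); split.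
  by apply: divr_gt0 => //; lra.
set epsb := D / (16 * K%:R).
have hepsK' : epsb * K%:R = D / 16.
  by rewrite /epsb; field.
have hepsK : epsb * K%:R <= D / 16 by rewrite hepsK'.
have hepsb : 0 < epsb by apply: divr_gt0 => //; lra.
have hepsb3 : epsb <= 1/3.
  have : epsb * K%:R >= epsb * 1 by apply: ler_wpM2l; lra.
  lra.
move=> theta hflow HS0; cbv zeta.
set pi := fun t => softmax (theta t).
set eps0 := 1 - pi 0 j.
pose L := (fun s => theta s a1) - (fun s => theta s j).
pose dL := fun t => eg_field r (theta t) a1 - eg_field r (theta t) j.
have hder : forall t : R, 0 <= t -> is_derive t 1 L (dL t).
  by move=> t ht; apply: is_deriveB; apply: hflow.
have hratio : forall t, pi t a1 / pi t j = expR (L t).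
  by move=> t; rewrite /pi sm_ratio; reflexivity.
have hpos : forall t a, 0 < pi t a by move=> t a; exact: sm_gt0.
have hrate : forall t, in_S epsb a1 j (pi t) -> D / 2 * pi t a1 <= dL t.
  by move=> t hS; exact: (@rate R K r (theta t) a1 j epsb hr01 ha1j hD hK1 hepsK hS).
case: (HS0) => he0 [heps0 hp10].
rewrite -/pi -/eps0 in he0 heps0 hp10.
have htwo : pi 0 a1 + pi 0 j <= 1 := @sm_two R K (theta 0) a1 j ha1j.
have {}hp10 : eps0 / K%:R <= pi 0 a1 := hp10.
have heps0def : eps0 = 1 - pi 0 j by [].
have hlnL0 : ln (pi 0 j / pi 0 a1) = - L 0.
  by rewrite /pi sm_ratio expRK opprB.
rewrite hlnL0.
have hL0 : L 0 < 0.
  rewrite ltNge; apply/negP => h.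
  have : expR 0 <= expR (L 0) by rewrite ler_expR.
  rewrite expR0 -hratio ler_pdivlMr ?hpos // mul1r.
  have := hpos 0 a1; have := hpos 0 j; lra.
set T := 4 * K%:R / (D * eps0) * - L 0.
have heps0p : 0 < eps0 by [].
have hcoef : 0 < 4 * K%:R / (D * eps0).
  apply: divr_gt0; first by lra.
  exact: mulr_gt0.
have hT : 0 < T by apply: mulr_gt0 => //; lra.
case: (pselect (exists t, 0 <= t <= T /\ ~ in_S epsb a1 j (pi t))).
  move=> [t [ht hnS]].
  rewrite ge_min; apply/orP; right.
  apply: ge_ereal_inf; exists t%:E; first by exists t => //; split => //; case/andP: ht.
  by rewrite lee_fin; case/andP: ht.
move=> hnone.
have HS : forall t, 0 <= t <= T -> in_S epsb a1 j (pi t).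
  move=> t ht; apply: contrapT => hn; apply: hnone; by exists t.
have hmono : forall t, 0 < t <= T -> L 0 <= L t.
  move=> t /andP [ht0 htT].
  have [c /andP [hc0 hct] hE] := (@mvt_helper R L dL 0 t (lexx 0) ht0 hder).
  rewrite -subr_ge0 hE subr0; apply: mulr_ge0; last exact: ltW.
  have := hrate c (HS c _); rewrite ltW // (le_trans (ltW hct) htT) => /(_ isT).
  have := hpos c a1; nra.
have [c /andP [hc0 hcT] hE] := (@mvt_helper R L dL 0 T (lexx 0) hT hder).
have HSc := HS c _; rewrite ltW // ltW //= in HSc; have {}HSc := HSc isT.
case: (HSc) => hec0 [hecb hecp].
have hLc := hmono c; rewrite hc0 ltW //= in hLc; have {}hLc := hLc isT.
have hexp : expR (L 0) <= expR (L c) by rewrite ler_expR.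
have hpc : pi c a1 = expR (L c) * pi c j.
  by rewrite -hratio divfK //; apply: lt0r_neq0.
have hL0e : eps0 / K%:R <= expR (L 0).
  rewrite -hratio; apply: (le_trans hp10).
  rewrite ler_pdivlMr ?hpos //; have := hpos 0 a1; have := hpos 0 j; nra.
have hpcj : 2/3 <= pi c j by lra.
have hpc1 : eps0 / K%:R * (2/3) <= pi c a1.
  rewrite hpc; apply: ler_pM.
  - by apply: divr_ge0; lra.
  - lra.
  - exact: le_trans hL0e hexp.
  - exact: hpcj.
have hdLc : D / 2 * (eps0 / K%:R * (2 / 3)) <= dL c.
  apply: le_trans (hrate c HSc); apply: ler_wpM2l => //; lra.
have hkey : D * eps0 / (4 * K%:R) * T = - L 0.
  rewrite /T; field; apply/and3P; split => //; apply: lt0r_neq0 => //.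
have hcmp : D * eps0 / (4 * K%:R) <= D / 2 * (eps0 / K%:R * (2 / 3)).
  have -> : D / 2 * (eps0 / K%:R * (2 / 3)) = D * eps0 / K%:R / 3 by field.
  have -> : D * eps0 / (4 * K%:R) = D * eps0 / K%:R / 4 by field.
  have : 0 <= D * eps0 / K%:R by apply: divr_ge0; [apply: mulr_ge0; lra | lra].
  set x := D * eps0 / K%:R; lra.
have hLT : 0 <= L T.
  have : D * eps0 / (4 * K%:R) * T <= dL c * T.
    apply: ler_wpM2r; [exact: ltW | exact: le_trans hcmp hdLc].
  rewrite hkey; rewrite subr0 in hE; rewrite -hE; lra.
rewrite ge_min; apply/orP; left.
apply: ge_ereal_inf; exists T%:E => //.
exists T => //; split; first exact: ltW.
by rewrite /in_W hratio -expR0 ler_expR.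
Qed.
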